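(* Let $M$ be a group and let $\Gamma$ be a normal subgroup of $M$ of finite index with $\Gamma \cong \mathbb{Z}$. Then there exists a characteristic subgroup $\Theta$ of $M$ (i.e. one mapped to itself by every automorphism of $M$) such that $\Theta \cong \mathbb{Z}$ and $\Theta \subset \Gamma$. *)

(* Defs.v *)
From Stdlib Require Import ZArith List.

Record group := Group {
  carrier :> Type;
  gmul : carrier -> carrier -> carrier;
  ginv : carrier -> carrier;
  gone : carrier;
  gmulA : forall x y z, gmul x (gmul y z) = gmul (gmul x y) z;
  gmul1l : forall x, gmul gone x = x;
  gmul1r : forall x, gmul x gone = x;
  gmulVl : forall x, gmul (ginv x) x = gone;
  gmulVr : forall x, gmul x (ginv x) = gone
}.

Arguments gmul {g}.
Arguments ginv {g}.
Arguments gone {g}.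

Definition is_subgroup (M : group) (H : M -> Prop) : Prop :=
  H gone /\ (forall x y, H x -> H y -> H (gmul x y)) /\ (forall x, H x -> H (ginv x)).

Definition is_normal_subgroup (M : group) (H : M -> Prop) : Prop :=
  is_subgroup M H /\ forall g x, H x -> H (gmul (gmul g x) (ginv g)).

(* Finite index: finitely many left cosets r H cover M. *)
Definition finite_index (M : group) (H : M -> Prop) : Prop :=
  exists reps : list M, forall g : M, exists r, In r reps /\ H (gmul (ginv r) g).

Definition iso_to_Z (M : group) (H : M -> Prop) : Prop :=
  exists f : Z -> M,
    (forall a b, f (a + b)%Z = gmul (f a) (f b)) /\
    (forall a b, f a = f b -> a = b) /\
    (forall g, H g <-> exists n, f n = g).

Definition is_automorphism (M : group) (phi : M -> M) : Prop :=
  (forall x y, phi (gmul x y) = gmul (phi x) (phi y)) /\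
  (forall x y, phi x = phi y -> x = y) /\
  (forall y, exists x, phi x = y).

Definition is_characteristic (M : group) (H : M -> Prop) : Prop :=
  is_subgroup M H /\
  forall phi, is_automorphism M phi ->
    (forall x, H x -> H (phi x)) /\ (forall y, H y -> exists x, H x /\ phi x = y).

(* Main.v *)
Require Import Defs.
From Stdlib Require Import ZArith List.
From Stdlib Require Import Arith Wf_nat Lia Classical ClassicalEpsilon.

Lemma gcancel_l (G : group) (a x y : G) : gmul a x = gmul a y -> x = y.
Proof.
  intro H. rewrite <- (gmul1l G x), <- (gmul1l G y), <- (gmulVl G a), <- !gmulA, H. reflexivity.
Qed.

Lemma ginv_uniq (G : group) (x y : G) : gmul x y = gone -> x = ginv y.
Proof.
  intro H. rewrite <- (gmul1r G x), <- (gmulVr G y), gmulA, H, gmul1l. reflexivity.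
Qed.

Definition ishom (G : group) (phi : G -> G) := forall x y, phi (gmul x y) = gmul (phi x) (phi y).

Lemma hom_one (G : group) phi : ishom G phi -> phi gone = gone.
Proof.
  intro H. apply (gcancel_l G (phi gone)). rewrite <- H, !gmul1r. reflexivity.
Qed.

Lemma hom_inv (G : group) phi : ishom G phi -> forall x, phi (ginv x) = ginv (phi x).
Proof.
  intros H x. apply ginv_uniq. rewrite <- H, gmulVl. apply hom_one; auto.
Qed.

Fixpoint gpow (G : group) (g : G) (n : nat) : G :=
  match n with 0 => gone | S n => gmul g (gpow G g n) end.

Lemma gpow_add (G : group) (g : G) a b : gpow G g (a + b) = gmul (gpow G g a) (gpow G g b).
Proof.
  induction a; simpl. now rewrite gmul1l. now rewrite IHa, gmulA.
Qed.

Lemma gpow_mul (G : group) (g : G) a b : gpow G g (a * b) = gpow G (gpow G g a) b.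
Proof.
  induction b; simpl. now rewrite Nat.mul_0_r.
  rewrite Nat.mul_succ_r, Nat.add_comm, gpow_add, IHb. reflexivity.
Qed.

Lemma sub_gpow (G : group) H (g : G) n : is_subgroup G H -> H g -> H (gpow G g n).
Proof.
  intros [H1 [H2 H3]] Hg. induction n; simpl; auto.
Qed.

Lemma hom_gpow (G : group) phi (g : G) n : ishom G phi -> phi (gpow G g n) = gpow G (phi g) n.
Proof.
  intro H. induction n; simpl. apply hom_one; auto. rewrite H, IHn. reflexivity.
Qed.

Lemma pigeon (G : group) (H : G -> Prop) (reps : list G) :
  is_subgroup G H -> (forall g, exists r, In r reps /\ H (gmul (ginv r) g)) ->
  forall g, exists j, 1 <= j <= length reps /\ H (gpow G g j).
Proof.
  intros HS Hc g. apply NNPP. intro Hn.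
  pose (rep := fun i => proj1_sig (constructive_indefinite_description _ (Hc (gpow G g i)))).
  assert (Hrep : forall i, In (rep i) reps /\ H (gmul (ginv (rep i)) (gpow G g i))).
  { intro i. unfold rep. destruct (constructive_indefinite_description _ _). exact a. }
  set (m := length reps) in *.
  assert (ND : NoDup (map rep (seq 0 (S m)))).
  { apply NoDup_map_NoDup_ForallPairs; [|apply seq_NoDup].
    assert (K : forall i j, i < j <= m -> rep i = rep j -> False).
    { intros i j Hij E. apply Hn. exists (j - i). split. lia.
      destruct (Hrep i) as [_ Hi]. destruct (Hrep j) as [_ Hj].
      rewrite E in Hi.
      replace (gpow G g j) with (gmul (gpow G g i) (gpow G g (j - i))) in Hj by (rewrite <- gpow_add; f_equal; lia). rewrite gmulA in Hj.
      destruct HS as [_ [HM HI]].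
      pose proof (HM _ _ (HI _ Hi) Hj) as X. rewrite gmulA, gmulVl, gmul1l in X. exact X. }
    intros a b Ha Hb E. apply in_seq in Ha, Hb.
    destruct (lt_eq_lt_dec a b) as [[l|e]|l]; auto.
    exfalso; apply (K a b); auto; lia.
    exfalso; apply (K b a); auto; lia. }
  apply NoDup_incl_length with (l' := reps) in ND.
  - rewrite length_map, length_seq in ND. unfold m in ND. lia.
  - intros x Hx. apply in_map_iff in Hx. destruct Hx as [i [<- _]]. apply Hrep.
Qed.

Lemma div_fact j m : 1 <= j <= m -> Nat.divide j (fact m).
Proof.
  induction m; intros Hj. lia.
  destruct (Nat.eq_dec j (S m)) as [->|].
  - exists (fact m). simpl. lia.
  - change (fact (S m)) with (S m * fact m). apply Nat.divide_mul_r. apply IHm. lia.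
Qed.

Lemma fact_power (G : group) (H : G -> Prop) (reps : list G) :
  is_subgroup G H -> (forall g, exists r, In r reps /\ H (gmul (ginv r) g)) ->
  forall g, H (gpow G g (fact (length reps))).
Proof.
  intros HS Hc g. destruct (pigeon G H reps HS Hc g) as [j [Hj Hg]].
  destruct (div_fact j (length reps) Hj) as [k Hk]. rewrite Hk, Nat.mul_comm, gpow_mul.
  apply sub_gpow; auto.
Qed.

Lemma aut_comp (M : group) p q : is_automorphism M p -> is_automorphism M q ->
  is_automorphism M (fun x => p (q x)).
Proof.
  intros [p1 [p2 p3]] [q1 [q2 q3]]. split; [|split].
  - intros x y. rewrite q1, p1. reflexivity.
  - intros x y E. auto.
  - intro y. destruct (p3 y) as [z <-]. destruct (q3 z) as [x <-]. eauto.
Qed.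

Lemma aut_inv (M : group) p : is_automorphism M p ->
  exists pi, is_automorphism M pi /\ (forall y, p (pi y) = y) /\ (forall x, pi (p x) = x).
Proof.
  intros [p1 [p2 p3]].
  pose (pi := fun y => proj1_sig (constructive_indefinite_description _ (p3 y))).
  assert (A : forall y, p (pi y) = y).
  { intro y. unfold pi. destruct (constructive_indefinite_description _ _). exact e. }
  assert (B : forall x, pi (p x) = x). { intro x. apply p2. apply A. }
  exists pi. split; [|split; auto]. split; [|split].
  - intros x y. apply p2. rewrite p1, !A. reflexivity.
  - intros x y E. rewrite <- (A x), <- (A y), E. reflexivity.
  - intro y. exists (p y). apply B.
Qed.

Lemma aut_hom (M : group) p : is_automorphism M p -> ishom M p.
Proof. intros [h _]. exact h. Qed.

Theorem proposition3p6 (M : group) (Gamma : M -> Prop) :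
  is_normal_subgroup M Gamma ->
  finite_index M Gamma ->
  iso_to_Z M Gamma ->
  exists Theta : M -> Prop,
    is_characteristic M Theta /\ iso_to_Z M Theta /\
    (forall x, Theta x -> Gamma x).
Proof.
  intros [HS _] [reps Hreps] [f [fhom [finj fim]]].
  pose (Theta := fun x : M => forall phi, is_automorphism M phi -> exists y, Gamma y /\ phi y = x).
  assert (ThS : is_subgroup M Theta).
  { destruct HS as [G1 [G2 G3]]. split; [|split].
    - intros phi Hp. exists gone. split; auto. apply hom_one, aut_hom; auto.
    - intros x y Hx Hy phi Hp. destruct (Hx phi Hp) as [a [Ha <-]]. destruct (Hy phi Hp) as [b [Hb <-]].
      exists (gmul a b). split; auto. apply aut_hom; auto.
    - intros x Hx phi Hp. destruct (Hx phi Hp) as [a [Ha <-]]. exists (ginv a). split; auto.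
      apply hom_inv, aut_hom; auto. }
  assert (ThG : forall x, Theta x -> Gamma x).
  { intros x Hx. destruct (Hx (fun z => z)) as [y [Hy <-]]; auto.
    split; [|split]; eauto. }
  exists Theta. split; [|split; auto].
  - split; auto. intros psi Hpsi. destruct (aut_inv M psi Hpsi) as [pi [Hpi [A B]]]. split.
    + intros x Hx phi Hphi. destruct (Hx _ (aut_comp M pi phi Hpi Hphi)) as [z [Hz E]].
      exists z. split; auto. rewrite <- E, A. reflexivity.
    + intros y Hy. exists (pi y). split; auto.
      intros phi Hphi. destruct (Hy _ (aut_comp M psi phi Hpsi Hphi)) as [z [Hz E]].
      exists z. split; auto. rewrite <- E, B. reflexivity.
  -
    assert (f0 : f 0%Z = gone).
    { apply (gcancel_l M (f 0%Z)). rewrite <- fhom, gmul1r. reflexivity. }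
    assert (fN : forall a, f (- a)%Z = ginv (f a)).
    { intro a. apply ginv_uniq. rewrite <- fhom, Z.add_opp_diag_l. exact f0. }
    pose (S := fun n => Theta (f n)).
    destruct ThS as [T1 [T2 T3]].
    assert (S0 : S 0%Z). { unfold S. rewrite f0. auto. }
    assert (SA : forall a b, S a -> S b -> S (a + b)%Z). { intros a b Ha Hb. unfold S. rewrite fhom. auto. }
    assert (SN : forall a, S a -> S (- a)%Z). { intros a Ha. unfold S. rewrite fN. auto. }
    assert (fpow : forall n, f (Z.of_nat n) = gpow M (f 1%Z) n).
    { induction n. exact f0. rewrite Nat2Z.inj_succ. simpl.
      replace (Z.succ (Z.of_nat n)) with (1 + Z.of_nat n)%Z by lia. rewrite fhom, IHn. reflexivity. }
    pose (K := fact (length reps)).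
    assert (SK : S (Z.of_nat K)).
    { unfold S. rewrite fpow. intros phi Hphi.
      assert (Hsub : is_subgroup M (fun x => exists y, Gamma y /\ phi y = x)).
      { destruct HS as [G1 [G2 G3]]. split; [|split].
        - exists gone. split; auto. apply hom_one, aut_hom; auto.
        - intros x y [a [Ha <-]] [b [Hb <-]]. exists (gmul a b). split; auto. apply aut_hom; auto.
        - intros x [a [Ha <-]]. exists (ginv a). split; auto. apply hom_inv, aut_hom; auto. }
      pose proof (fact_power M _ (map phi reps) Hsub) as FP.
      rewrite length_map in FP. apply FP.
      intro g. destruct Hphi as [p1 [p2 p3]]. destruct (p3 g) as [g' <-].
      destruct (Hreps g') as [r [Hr Hg]]. exists (phi r). split. apply in_map; auto.
      exists (gmul (ginv r) g'). split; auto. rewrite p1, hom_inv; auto. }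
    assert (Kpos : 0 < K) by apply lt_O_fact.
    pose (P := fun n => 0 < n /\ S (Z.of_nat n)).
    destruct (dec_inh_nat_subset_has_unique_least_element P (fun n => classic (P n)))
      as [d [[[Hd0 Hd] Hdmin] _]].
    { exists K. split; auto. }
    assert (Smul : forall q, S (Z.of_nat d * q)%Z).
    { assert (Nq : forall n, S (Z.of_nat d * Z.of_nat n)%Z).
      { induction n. rewrite Z.mul_0_r. auto.
        replace (Z.of_nat d * Z.of_nat (Datatypes.S n))%Z with (Z.of_nat d + Z.of_nat d * Z.of_nat n)%Z by lia.
        auto. }
      intro q. destruct (Z_le_gt_dec 0 q).
      - replace q with (Z.of_nat (Z.to_nat q)) by lia. auto.
      - replace (Z.of_nat d * q)%Z with (- (Z.of_nat d * Z.of_nat (Z.to_nat (- q))))%Z by lia. auto. }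
    exists (fun n => f (Z.of_nat d * n)%Z). split; [|split].
    + intros a b. rewrite Z.mul_add_distr_l. apply fhom.
    + intros a b E. apply finj in E. nia.
    + intro g. split.
      * intro Hg. destruct (proj1 (fim g) (ThG g Hg)) as [k <-].
        assert (Sk : S k) by exact Hg.
        set (D := Z.of_nat d).
        assert (Dnz : D <> 0%Z) by (unfold D; lia).
        pose proof (Z.div_mod k D Dnz) as DM.
        pose proof (Z.mod_pos_bound k D ltac:(unfold D; lia)) as MB.
        assert (Sm : S (k mod D)%Z).
        { replace (k mod D)%Z with (k + - (D * (k / D)))%Z by lia. apply SA; auto. }
        destruct (Z.eq_dec (k mod D) 0) as [e|ne].
        -- exists (k / D)%Z. f_equal. lia.
        -- exfalso. assert (P (Z.to_nat (k mod D))) as HP.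
           { split. lia. rewrite Z2Nat.id by lia. auto. }
           apply Hdmin in HP. unfold D in *. lia.
      * intros [n <-]. apply Smul.
Qed.
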